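(* For every integer $k\ge 1$ there exists a $2$-connected (finite, simple) graph $G_k$ with pathwidth at least $k$ and cocircumference at most $2k$.
   Context: A bond of a graph $G$ is an inclusion-wise minimal set of edges $F$ such that $G-F$ has more connected components than $G$; the cocircumference is the maximum size of a bond. A path-decomposition of $G$ is a sequence $(X_0,\dots,X_s)$ of subsets of $V(G)$ such that for each vertex $x$ the indices $i$ with $x\in X_i$ form a non-empty interval, and each edge has both ends in some $X_i$; its width is $\max_i|X_i|-1$, and the pathwidth is the minimum width of a path-decomposition. *)

(* Defs.v *)
From mathcomp Require Import all_boot.
Set Implicit Arguments. Unset Strict Implicit. Unset Printing Implicit Defensive.

Section Graphs.
Variable T : finType.
Implicit Types (e : rel T) (S : {set T}).

Definition simple_graph e : Prop := symmetric e /\ irreflexive e.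

Definition edges e : {set {set T}} := [set [set x; y] | x in T, y in T & e x y].

Definition ncomp e : nat := n_comp e predT.

Definition del_edges e (F : {set {set T}}) : rel T :=
  fun x y => e x y && ([set x; y] \notin F).

Definition bond e (F : {set {set T}}) : bool :=
  minset (fun F : {set {set T}} =>
            (F \subset edges e) && (ncomp e < ncomp (del_edges e F))) F.

(* Cocircumference: the maximum size of a bond (0 if there is none). *)
Definition cocircumference e : nat := \max_(F : {set {set T}} | bond e F) #|F|.

Definition connected_on e S : Prop :=
  forall x y, x \in S -> y \in S ->
    connect [rel u v | [&& e u v, u \in S & v \in S]] x y.

(* 2-connected: more than 2 vertices and G - X connected for every |X| < 2. *)
Definition two_connected e : Prop :=
  2 < #|T| /\ connected_on e [set: T] /\ forall v : T, connected_on e [set~ v].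

Definition path_decomposition e (s : seq {set T}) : Prop :=
  [/\ 0 < size s,
      (forall x : T, exists2 i, i < size s & x \in nth set0 s i),
      (forall (x : T) (i j l : nat), i <= l -> l <= j -> j < size s ->
          x \in nth set0 s i -> x \in nth set0 s j -> x \in nth set0 s l) &
      (forall x y : T, e x y -> exists2 i, i < size s &
          (x \in nth set0 s i) && (y \in nth set0 s i))].

Definition pd_width (s : seq {set T}) : nat := (\max_(X <- s) #|X|).-1.

(* pathwidth >= k : every path-decomposition has width at least k
   (the pathwidth is the minimum width of a path-decomposition). *)
Definition pathwidth_at_least e (k : nat) : Prop :=
  forall s : seq {set T}, path_decomposition e s -> k <= pd_width s.

End Graphs.

(* Main.v *)
Require Import Defs.
From mathcomp Require Import all_boot zify.
Set Implicit Arguments. Unset Strict Implicit. Unset Printing Implicit Defensive.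

Definition sz j := 2 * 3 ^ j.
Arguments sz : simpl never.

Lemma szS j : sz j.+1 = sz j + sz j + sz j.
Proof. rewrite /sz expnS; lia. Qed.

Lemma sz_ge2 j : 2 <= sz j.
Proof. rewrite /sz; have := expn_gt0 3 j; lia. Qed.

Lemma sz0 : sz 0 = 2. Proof. by []. Qed.

Fixpoint E j o u v : bool :=
  match j with
  | 0 => (u == o) && (v == o.+1)
  | j'.+1 =>
     [|| E j' o u v, E j' (o + sz j') u v, E j' (o + sz j' + sz j') u v,
         (u == o + sz j' - 1) && (v == o + sz j'),
         (u == o + sz j' + sz j' - 1) && (v == o + sz j' + sz j')
       | (u == o) && (v == o + sz j'.+1 - 1)]
  end.

Inductive ES_spec j o u v : Prop :=
 | ES1 of E j o u v | ES2 of E j (o + sz j) u v | ES3 of E j (o + sz j + sz j) u v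
 | ES4 of u = o + sz j - 1 & v = o + sz j
 | ES5 of u = o + sz j + sz j - 1 & v = o + sz j + sz j
 | ES6 of u = o & v = o + sz j.+1 - 1.

Lemma ESP j o u v : E j.+1 o u v -> ES_spec j o u v.
Proof.
rewrite /=; case/or3P => [?|?|/orP[?|/orP[/andP[/eqP ? /eqP ?]|/orP[/andP[/eqP ? /eqP ?]|/andP[/eqP ? /eqP ?]]]]].
- exact: ES1.
- exact: ES2.
- exact: ES3.
- exact: ES4.
- exact: ES5.
- exact: ES6.
Qed.

Lemma E0P o u v : E 0 o u v -> u = o /\ v = o.+1.
Proof. by move=> /andP[/eqP -> /eqP ->]. Qed.

Lemma E_range j o u v : E j o u v -> [/\ o <= u, u < v & v < o + sz j].
Proof.
elim: j o => [|j IH] o.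
  by move=> /E0P [-> ->]; rewrite sz0; split; lia.
have := sz_ge2 j; rewrite szS => h2.
case/ESP => [/IH[]|/IH[]|/IH[]|-> ->|-> ->|-> ->]; rewrite ?szS; intros; split; lia.
Qed.

Lemma E_path j o x : o <= x -> x.+1 < o + sz j -> E j o x x.+1.
Proof.
elim: j o => [|j IH] o /=.
  rewrite sz0 => h1 h2; have -> : x = o by lia.
  by rewrite !eqxx.
have := sz_ge2 j; rewrite szS => h2 h3 h4.
case: (ltnP x.+1 (o + sz j)) => h5; first by rewrite IH.
case: (eqVneq x.+1 (o + sz j)) => h6.
  by rewrite (_ : x == o + sz j - 1) ?h6 ?eqxx ?orbT //; apply/eqP; lia.
case: (ltnP x.+1 (o + sz j + sz j)) => h7.
  by rewrite (IH (o + sz j)) ?orbT //; lia.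
case: (eqVneq x.+1 (o + sz j + sz j)) => h8.
  by rewrite (_ : x == o + sz j + sz j - 1) ?h8 ?eqxx ?orbT //; apply/eqP; lia.
by rewrite (IH (o + sz j + sz j)) ?orbT //; lia.
Qed.

Lemma E_close j o : E j o o (o + sz j - 1).
Proof.
case: j => [|j] /=; first by rewrite sz0 eqxx /=; apply/eqP; lia.
by rewrite !eqxx !orbT.
Qed.

Lemma E_noncross j o x y u v :
  E j o x y -> E j o u v -> x < u -> u < y -> y < v -> False.
Proof.
elim: j o x y u v => [|j IH] o x y u v.
  move=> /E0P[-> ->] /E0P[-> ->]; lia.
have := sz_ge2 j => h2; have hS := szS j.
have R := @E_range j.
move=> H1 H2; move: H1 H2 (IH o x y u v) (IH (o + sz j) x y u v) (IH (o + sz j + sz j) x y u v).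
case/ESP => [/[dup] ? /R[? ? ?]|/[dup] ? /R[? ? ?]|/[dup] ? /R[? ? ?]|-> ->|-> ->|-> ->];
  case/ESP => [/[dup] ? /R[? ? ?]|/[dup] ? /R[? ? ?]|/[dup] ? /R[? ? ?]|-> ->|-> ->|-> ->]; intros;
  try lia; eauto.
Qed.

Fixpoint crs j o c : seq (nat * nat) :=
  if o < c < o + sz j then (o, o + sz j - 1) ::
    match j with
    | 0 => [::]
    | j'.+1 =>
      (if c == o + sz j' then [:: (o + sz j' - 1, o + sz j')] else [::]) ++
      (if c == o + sz j' + sz j' then [:: (o + sz j' + sz j' - 1, o + sz j' + sz j')] else [::]) ++
      crs j' o c ++ crs j' (o + sz j') c ++ crs j' (o + sz j' + sz j') c
    end
  else [::].

Lemma crs_nil j o c : ~~ (o < c < o + sz j) -> crs j o c = [::].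
Proof. by case: j => [|j] /= /negbTE ->. Qed.

Lemma crs_size j o c : size (crs j o c) <= j.+1.
Proof.
elim: j o => [|j IH] o /=; first by case: ifP.
case: ifP => // hin /=.
have := sz_ge2 j => h2; have hS := szS j.
rewrite !size_cat.
have I1 := IH o; have I2 := IH (o + sz j); have I3 := IH (o + sz j + sz j).
have N1 : ~~ (o < c < o + sz j) -> size (crs j o c) = 0 by move/crs_nil ->.
have N2 : ~~ (o + sz j < c < o + sz j + sz j) -> size (crs j (o + sz j) c) = 0 by move/crs_nil ->.
have N3 : ~~ (o + sz j + sz j < c < o + sz j + sz j + sz j) -> size (crs j (o + sz j + sz j) c) = 0 by move/crs_nil ->.
case: (boolP (o < c < o + sz j)) => [?|/N1 ?];
case: (boolP (o + sz j < c < o + sz j + sz j)) => [?|/N2 ?];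
case: (boolP (o + sz j + sz j < c < o + sz j + sz j + sz j)) => [?|/N3 ?];
case: eqP => ?; case: eqP => ? /=; lia.
Qed.

Lemma crs_mem j o c u v : E j o u v -> u < c <= v -> (u, v) \in crs j o c.
Proof.
elim: j o => [|j IH] o.
  move=> /E0P[-> ->] h /=. rewrite sz0 ifT; last lia.
  have -> : o + 2 - 1 = o.+1 by lia.
  by rewrite inE.
move=> HE h; have [r1 r2 r3] := E_range HE.
have := sz_ge2 j => h2; have hS := szS j.
rewrite /= ifT; last lia.
move: HE h; case/ESP => [H h|H h|H h|-> -> h|-> -> h|-> -> h].
- by rewrite inE !mem_cat (IH o) ?orbT.
- by rewrite inE !mem_cat (IH (o + sz j)) ?orbT.
- by rewrite inE !mem_cat (IH (o + sz j + sz j)) ?orbT.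
- have -> : c = o + sz j by lia.
  by rewrite eqxx inE mem_cat inE eqxx orbT.
- have -> : c = o + sz j + sz j by lia.
  by rewrite eqxx inE !mem_cat inE eqxx !orbT.
- by rewrite inE eqxx.
Qed.

Section G.
Variable K : nat.
Notation T := ('I_(sz K)).

Definition ge : rel T := fun x y => E K 0 x y || E K 0 y x.

Lemma ge_sym : symmetric ge.
Proof. by move=> x y; rewrite /ge orbC. Qed.

Lemma ge_irr : irreflexive ge.
Proof. by move=> x; rewrite /ge orbb; apply/negP => /E_range[]; lia. Qed.

Lemma ge_lt (x y : T) : ge x y -> x < y -> E K 0 x y.
Proof. by case/orP => // /E_range[]; lia. Qed.



Definition rst (S : {set T}) := [rel u v | [&& ge u v, u \in S & v \in S]].

Lemma rst_sym S : symmetric (rst S).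
Proof. by move=> u v /=; rewrite ge_sym [(u \in S) && _]andbC. Qed.

Lemma rst_csym S : connect_sym (rst S).
Proof. exact/sym_connect_sym/rst_sym. Qed.

Lemma rst_mono (S S' : {set T}) x y : S \subset S' -> connect (rst S) x y -> connect (rst S') x y.
Proof.
move=> sub; apply: connect_sub => u v /= /and3P[h hu hv]; apply: connect1.
by rewrite /= h !(subsetP sub).
Qed.

Lemma conn_union (S1 S2 : {set T}) p q :
  connected_on ge S1 -> connected_on ge S2 -> p \in S1 -> q \in S2 -> ge p q ->
  connected_on ge (S1 :|: S2).
Proof.
move=> c1 c2 hp hq hpq.
have s1 : S1 \subset S1 :|: S2 by apply: subsetUl.
have s2 : S2 \subset S1 :|: S2 by apply: subsetUr.
have epq : connect (rst (S1 :|: S2)) p q.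
  by apply: connect1; rewrite /= hpq !inE hp hq orbT.
have key : forall x y, x \in S1 -> y \in S2 -> connect (rst (S1 :|: S2)) x y.
  move=> x y hx hy; apply: connect_trans (rst_mono s1 (c1 _ _ hx hp)) _.
  exact: connect_trans epq (rst_mono s2 (c2 _ _ hq hy)).
move=> x y; rewrite !inE => /orP[hx|hx] /orP[hy|hy].
- exact: rst_mono s1 (c1 _ _ hx hy).
- exact: key.
- by rewrite rst_csym; apply: key.
- exact: rst_mono s2 (c2 _ _ hx hy).
Qed.

Lemma ge_path (x y : T) : y = x.+1 :> nat -> ge x y.
Proof. by move=> hy; rewrite /ge hy E_path // -hy add0n. Qed.

Definition ival lo hi : {set T} := [set x : T | lo <= x < hi].

Lemma conn_ival lo hi : connected_on ge (ival lo hi).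
Proof.
have step : forall (x y : T), x <= y -> x \in ival lo hi -> y \in ival lo hi ->
    connect (rst (ival lo hi)) x y.
  move=> x y; move: {2}(y - x) (erefl (y - x)) => d; elim: d y => [|d IH] y hd hxy hx hy.
    by have -> : y = x by apply: val_inj => /=; lia.
  have hy1 : y.-1 < sz K by have := ltn_ord y; lia.
  pose y' := Ordinal hy1.
  have hy' : y' \in ival lo hi by move: hx hy; rewrite !inE /=; lia.
  apply: connect_trans (IH y' _ _ hx hy') _; rewrite /=; try lia.
  apply: connect1; rewrite /= hy' hy andbT ge_path //=; lia.
move=> x y hx hy; case: (leqP x y) => h; first exact: step.
by rewrite rst_csym; apply: step => //; lia.
Qed.

End G.

Section G4.
Variable K : nat.
Hypothesis K1 : 1 <= K.
Notation T := ('I_(sz K)).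

Lemma szK : 6 <= sz K.
Proof. case: K K1 => // j _; rewrite szS; have := sz_ge2 j; lia. Qed.

Lemma ge_simple : simple_graph (@ge K).
Proof. split; [exact: ge_sym | exact: ge_irr]. Qed.

Lemma ge_close (p q : T) : val p = 0 -> val q = (sz K).-1 -> ge p q.
Proof.
move=> hp hq; apply/orP; left; rewrite hp hq.
have := E_close K 0; rewrite add0n; by have -> : (sz K).-1 = sz K - 1 by lia.
Qed.

Lemma ge_2conn : two_connected (@ge K).
Proof.
split; first by rewrite card_ord; have := szK; lia.
have hT : [set: T] = ival K 0 (sz K) by apply/setP => x; rewrite !inE ltn_ord.
split; first by rewrite hT; apply: conn_ival.
move=> v.
have h0 : 0 < sz K by have := szK; lia.
have h1 : (sz K).-1 < sz K by lia.
case: (eqVneq (v : nat) 0) => hv0.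
  have -> : [set~ v] = ival K 1 (sz K).
    apply/setP => x; rewrite !inE ltn_ord andbT.
    apply/idP/idP => [hx|hx]; last by apply/eqP => hxv; move: hx; rewrite hxv hv0.
    by case: (posnP x) => // hx0; move: hx; rewrite (_ : x == v) //; apply/eqP/val_inj; rewrite /= hx0 hv0.
  exact: conn_ival.
case: (eqVneq (v : nat) (sz K).-1) => hv1.
  have -> : [set~ v] = ival K 0 (sz K).-1.
    apply/setP => x; rewrite !inE /=.
    apply/idP/idP => [hx|hx]; last by apply/eqP => hxv; move: hx; rewrite hxv hv1; lia.
    have := ltn_ord x; case: (eqVneq (x : nat) (sz K).-1) => hx1; last lia.
    by move: hx; rewrite (_ : x == v) //; apply/eqP/val_inj; rewrite /= hx1 hv1.
  exact: conn_ival.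
have -> : [set~ v] = ival K 0 v :|: ival K v.+1 (sz K).
  apply/setP => x; rewrite !inE ltn_ord andbT /=.
  apply/idP/idP => [hx|/orP[hx|hx]]; last 2 first.
  - by apply/eqP => hxv; move: hx; rewrite hxv; lia.
  - by apply/eqP => hxv; move: hx; rewrite hxv; lia.
  have : (x : nat) != v by apply: contra hx => /eqP h; apply/eqP/val_inj.
  lia.
apply: (@conn_union K _ _ (Ordinal h0) (Ordinal h1)).
- exact: conn_ival.
- exact: conn_ival.
- rewrite inE /=; lia.
- rewrite inE /=; have := ltn_ord v; lia.
- exact: ge_close.
Qed.

End G4.

Section G5.
Variable K : nat.
Notation T := ('I_(sz K)).
Notation ge := (@ge K).

Definition weight (X : {set T}) p := forall s, path_decomposition ge s ->
  exists2 i, i < size s & p <= #|X :&: nth set0 s i|.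

Lemma conn_bag (Z : {set T}) s z1 z3 i1 i3 l :
  connected_on ge Z -> path_decomposition ge s ->
  z1 \in Z -> z1 \in nth set0 s i1 -> z3 \in Z -> z3 \in nth set0 s i3 ->
  i1 <= l -> l <= i3 -> i3 < size s ->
  exists2 z, z \in Z & z \in nth set0 s l.
Proof.
move=> cZ [_ _ hint hedge] z1Z z1b z3Z z3b h1 h2 h3.
case: (boolP [exists z, (z \in Z) && (z \in nth set0 s l)]) => [/existsP[z /andP[]]|H].
  by exists z.
have nZ : forall z, z \in Z -> z \in nth set0 s l -> False.
  by move=> z hz hzl; move/existsP: H; apply; exists z; rewrite hz hzl.
pose L := [set x : T | [exists i : 'I_l, x \in nth set0 s i]].
have cl : closed (rst Z) L.
  apply: intro_closed; first exact: rst_csym.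
  move=> x y /and3P[exy xZ yZ]; rewrite !inE => /existsP[i xi].
  have [j js /andP[xj yj]] := hedge _ _ exy.
  case: (ltnP j l) => hj; first by apply/existsP; exists (Ordinal hj).
  exfalso; apply: (nZ x xZ); apply: (hint x i j l) => //; exact: ltnW.
have := closed_connect cl (cZ _ _ z1Z z3Z).
rewrite !inE; case: (ltnP i1 l) => hl.
  have -> : [exists i : 'I_l, z1 \in nth set0 s i] by apply/existsP; exists (Ordinal hl).
  move=> /esym/existsP[i zi]; exfalso; apply: (nZ z3 z3Z); apply: (hint z3 i i3 l) => //.
  exact: ltnW.
have -> : l = i1 by lia.
by move=> _; exfalso; apply: (nZ z1 z1Z); have -> : l = i1 by lia.
Qed.

Lemma core (Xb Zb W : {set T}) s p ia ib ic xa xc :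
  connected_on ge Zb -> path_decomposition ge s -> [disjoint Zb & Xb] ->
  Xb \subset W -> Zb \subset W ->
  xa \in Zb -> xa \in nth set0 s ia -> xc \in Zb -> xc \in nth set0 s ic ->
  ((ia <= ib <= ic) || (ic <= ib <= ia)) -> ia < size s -> ic < size s ->
  p <= #|Xb :&: nth set0 s ib| -> p.+1 <= #|W :&: nth set0 s ib|.
Proof.
move=> cZ pd dZ sX sZ xaZ xab xcZ xcb ord ha hc hp.
have [z zZ zb] : exists2 z, z \in Zb & z \in nth set0 s ib.
  case/orP: ord => /andP[o1 o2].
  - exact: (conn_bag cZ pd xaZ xab xcZ xcb o1 o2 hc).
  - exact: (conn_bag cZ pd xcZ xcb xaZ xab o1 o2 ha).
have zX : z \notin Xb by rewrite (disjointFr dZ zZ).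
have : z |: (Xb :&: nth set0 s ib) \subset W :&: nth set0 s ib.
  apply/subsetP => y; rewrite !inE => /orP[/eqP->|/andP[yX yb]].
    by rewrite zb (subsetP sZ).
  by rewrite yb (subsetP sX).
move/subset_leq_card; rewrite cardsU1 inE (negbTE zX) /= => h; apply: leq_trans h; by rewrite add1n ltnS.
Qed.

Lemma weight_step (X1 X2 X3 Z1 Z2 Z3 W : {set T}) p : 0 < p ->
  weight X1 p -> weight X2 p -> weight X3 p ->
  connected_on ge Z1 -> connected_on ge Z2 -> connected_on ge Z3 ->
  [disjoint Z1 & X1] -> [disjoint Z2 & X2] -> [disjoint Z3 & X3] ->
  X2 \subset Z1 -> X3 \subset Z1 -> X1 \subset Z2 -> X3 \subset Z2 ->
  X1 \subset Z3 -> X2 \subset Z3 ->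
  X1 \subset W -> X2 \subset W -> X3 \subset W ->
  Z1 \subset W -> Z2 \subset W -> Z3 \subset W ->
  weight W p.+1.
Proof.
move=> p0 w1 w2 w3 c1 c2 c3 d1 d2 d3 s21 s31 s12 s32 s13 s23 sW1 sW2 sW3 sZ1 sZ2 sZ3 s pd.
have [i1 h1 q1] := w1 s pd; have [i2 h2 q2] := w2 s pd; have [i3 h3 q3] := w3 s pd.
have pick : forall (X : {set T}) i, p <= #|X :&: nth set0 s i| -> exists2 x, x \in X & x \in nth set0 s i.
  move=> X i hq; have := leq_trans p0 hq.
  by case/card_gt0P => x; rewrite inE => /andP[]; exists x.
have [x1 x1X x1b] := pick _ _ q1; have [x2 x2X x2b] := pick _ _ q2; have [x3 x3X x3b] := pick _ _ q3.
case: (leqP i1 i2) => o12; case: (leqP i2 i3) => o23; case: (leqP i1 i3) => o13.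
- exists i2 => //; apply: (core c2 pd d2 sW2 sZ2 (subsetP s12 _ x1X) x1b (subsetP s32 _ x3X) x3b) => //.
  by apply/orP; left; apply/andP; split; clear -o12 o23 o13; lia.
- by clear -o12 o23 o13; lia.
- exists i3 => //; apply: (core c3 pd d3 sW3 sZ3 (subsetP s13 _ x1X) x1b (subsetP s23 _ x2X) x2b) => //.
  by apply/orP; left; apply/andP; split; clear -o12 o23 o13; lia.
- exists i1 => //; apply: (core c1 pd d1 sW1 sZ1 (subsetP s31 _ x3X) x3b (subsetP s21 _ x2X) x2b) => //.
  by apply/orP; left; apply/andP; split; clear -o12 o23 o13; lia.
- exists i1 => //; apply: (core c1 pd d1 sW1 sZ1 (subsetP s21 _ x2X) x2b (subsetP s31 _ x3X) x3b) => //.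
  by apply/orP; left; apply/andP; split; clear -o12 o23 o13; lia.
- exists i3 => //; apply: (core c3 pd d3 sW3 sZ3 (subsetP s23 _ x2X) x2b (subsetP s13 _ x1X) x1b) => //.
  by apply/orP; left; apply/andP; split; clear -o12 o23 o13; lia.
- by clear -o12 o23 o13; lia.
- exists i2 => //; apply: (core c2 pd d2 sW2 sZ2 (subsetP s32 _ x3X) x3b (subsetP s12 _ x1X) x1b) => //.
  by apply/orP; left; apply/andP; split; clear -o12 o23 o13; lia.
Qed.

End G5.

Section G6.
Variable K : nat.
Notation T := ('I_(sz K)).
Notation ge := (@ge K).

Inductive blk : nat -> nat -> Prop :=
 | blk_top : blk K 0
 | blk_1 j o : blk j.+1 o -> blk j o
 | blk_2 j o : blk j.+1 o -> blk j (o + sz j)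
 | blk_3 j o : blk j.+1 o -> blk j (o + sz j + sz j).

Lemma blk_E j o u v : blk j o -> E j o u v -> E K 0 u v.
Proof.
move=> B; elim: B u v => {j o} [//|j o _ IH|j o _ IH|j o _ IH] u v H; apply: IH => /=;
  by rewrite H ?orbT.
Qed.

Lemma blk_range j o : blk j o -> o + sz j <= sz K.
Proof. elim => {j o} [|j o _|j o _|j o _]; rewrite ?szS; lia. Qed.

Ltac sset := rewrite ?disjoint_subset; apply/subsetP => x; rewrite /ival !inE /= => hx; lia.

Lemma weight_blk j o : blk j o -> weight (ival K o (o + sz j)) j.+2.
Proof.
elim: j o => [|j IH] o B.
  have hr := blk_range B; rewrite sz0 in hr.
  have ha : o < sz K by lia.
  have hb : o.+1 < sz K by lia.
  have eab : ge (Ordinal ha) (Ordinal hb).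
    by apply/orP; left; apply: (blk_E B) => /=; rewrite !eqxx.
  move=> s [_ _ _ hedge]; have [i hi /andP[ai bi]] := hedge _ _ eab.
  exists i => //.
  have : [set Ordinal ha; Ordinal hb] \subset ival K o (o + sz 0) :&: nth set0 s i.
    apply/subsetP => x; rewrite !inE => /orP[/eqP->|/eqP->]; rewrite ?ai ?bi /= sz0 andbT; lia.
  move/subset_leq_card; rewrite cards2; case: eqP => // [[]]; lia.
have hr := blk_range B; have hS := szS j; have h2 := sz_ge2 j.
have w1 := IH _ (blk_1 B); have w2 := IH _ (blk_2 B); have w3 := IH _ (blk_3 B).
have ho : o < sz K by lia.
have hc : o + sz j.+1 - 1 < sz K by lia.
have ec : ge (Ordinal ho) (Ordinal hc).
  by apply/orP; left; apply: (blk_E B); apply: E_close.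
apply: (@weight_step K _ _ _ (ival K (o + sz j) (o + sz j.+1)) (ival K o (o + sz j) :|: ival K (o + sz j + sz j) (o + sz j + sz j + sz j)) (ival K o (o + sz j + sz j)) _ _ _ w1 w2 w3).
- done.
- exact: conn_ival.
- apply: (@conn_union K _ _ (Ordinal ho) (Ordinal hc)) => //; try exact: conn_ival; rewrite /ival inE /=; lia.
- exact: conn_ival.
all: sset.
Qed.

Lemma pw_ge : pathwidth_at_least ge K.+1.
Proof.
move=> s pd; have [i hi hc] := weight_blk blk_top pd.
rewrite /pd_width.
have : #|nth set0 s i| <= \max_(X <- s) #|X| by apply: (leq_bigmax_seq (nth set0 s i)) => //; exact: mem_nth.
have : #|ival K 0 (0 + sz K) :&: nth set0 s i| <= #|nth set0 s i| by apply/subset_leq_card/subsetIr.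
lia.
Qed.

End G6.

Section Gen.
Variable T : finType.

Lemma ncomp_gt1 (r : rel T) : symmetric r ->
  (1 < ncomp r) <-> exists x y, ~~ connect r x y.
Proof.
move=> sr; have cs := sym_connect_sym sr; rewrite /ncomp; split.
  case/card_gt1P => x [y [hx hy hxy]]; exists x, y; apply/negP => cxy.
  move: hx hy; rewrite !inE /= !andbT /roots => /eqP hx /eqP hy.
  by move/(rootP cs): cxy; rewrite hx hy => exy; rewrite exy eqxx in hxy.
case=> x [y nc]; apply/card_gt1P; exists (root r x), (root r y).
rewrite !inE /= !andbT !(roots_root cs); split => //.
by rewrite (root_connect cs).
Qed.

Lemma ncomp_ge1 (r : rel T) (x0 : T) : symmetric r -> 0 < ncomp r.
Proof.
move=> sr; apply/card_gt0P; exists (root r x0).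
by rewrite !inE /= andbT (roots_root (sym_connect_sym sr)).
Qed.

Lemma ncomp_le1 (r : rel T) : symmetric r -> (forall x y, connect r x y) -> ncomp r <= 1.
Proof.
move=> sr all; rewrite leqNgt; apply/negP => /(ncomp_gt1 sr)[x [y]].
by rewrite all.
Qed.

Lemma cut_edge (r : rel T) (L : {set T}) x y : symmetric r -> connect r x y ->
  x \in L -> y \notin L -> exists a b, [/\ r a b, a \in L & b \notin L].
Proof.
move=> sr cxy xL yL.
case: (boolP [exists a, exists b, [&& r a b, a \in L & b \notin L]]).
  by case/existsP => a /existsP[b /and3P[]]; exists a, b.
move=> H; exfalso.
have cl : closed r L.
  apply: intro_closed; first exact: sym_connect_sym.
  move=> a b rab aL; apply/negPn/negP => bL; move/negP: H; apply.
  by apply/existsP; exists a; apply/existsP; exists b; rewrite rab aL.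
by move: (closed_connect cl cxy); rewrite xL (negbTE yL).
Qed.

Lemma connect_restrict (r r' : rel T) (S : {set T}) a b :
  (forall u v, r u v -> u \in S -> v \in S -> r' u v) ->
  (forall u v, r u v -> u \in S -> v \in S) ->
  a \in S -> connect r a b -> connect r' a b.
Proof.
move=> sub cl aS /connectP[p pth ->]; elim: p a aS pth => //= c p IH a aS /andP[rac pth].
have cS := cl _ _ rac aS.
exact: connect_trans (connect1 (sub _ _ rac aS cS)) (IH c cS pth).
Qed.

End Gen.

Section Bond.
Variable T : finType.
Variable e : rel T.
Hypothesis se : symmetric e.
Hypothesis ce : forall x y, connect e x y.

Definition delta (A : {set T}) : {set {set T}} := [set [set x; y] | x in A, y in ~: A & e x y].

Lemma mem_delta A x y : e x y -> ([set x; y] \in delta A) = ((x \in A) != (y \in A)).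
Proof.
move=> exy; apply/imset2P/idP.
  case=> a b aA; rewrite !inE => /andP[bA eab] eq.
  have ha : a \in [set x; y] by rewrite eq !inE eqxx.
  have hb : b \in [set x; y] by rewrite eq !inE eqxx orbT.
  move: ha hb; rewrite !inE => /orP[]/eqP<- /orP[]/eqP hb; subst;
    rewrite ?aA ?(negbTE bA) //; by move: bA; rewrite aA.
case: (boolP (x \in A)) => xA /= yA.
  by apply: (Imset2spec (x1 := x) (x2 := y)); rewrite // !inE yA exy.
apply: (Imset2spec (x1 := y) (x2 := x)); [by move: yA; case: (y \in A) | by rewrite !inE xA se | by rewrite setUC].
Qed.

Lemma delta_sub_edges A : delta A \subset edges e.
Proof.
apply/subsetP => z /imset2P[a b _]; rewrite !inE => /andP[_ eab] ->.
by apply/imset2P; apply: (Imset2spec (x1 := a) (x2 := b)); rewrite ?inE.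
Qed.

Lemma del_sym F : symmetric (del_edges e F).
Proof. by move=> x y; rewrite /del_edges se setUC. Qed.

Definition comp F x : {set T} := [set z | connect (del_edges e F) x z].

Lemma comp_closed F x : closed (del_edges e F) (comp F x).
Proof.
apply: intro_closed; first exact/sym_connect_sym/del_sym.
move=> u v ruv; rewrite !inE => cu; exact: connect_trans cu (connect1 ruv).
Qed.

Lemma delta_comp_sub F x : delta (comp F x) \subset F.
Proof.
apply/subsetP => z /imset2P[a b aC]; rewrite !inE => /andP[bC eab] ->.
apply/negPn/negP => nF.
have h : del_edges e F a b by rewrite /del_edges eab nF.
have cl := @comp_closed F x.
by move: bC (cl a b h); rewrite aC !inE => /negbTE ->.
Qed.

Lemma delta_comp_P F x y : y \notin comp F x ->
  (delta (comp F x) \subset edges e) && (ncomp e < ncomp (del_edges e (delta (comp F x)))).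
Proof.
move=> yC; rewrite delta_sub_edges /=.
have -> : ncomp e = 1.
  apply/eqP; rewrite eqn_leq (ncomp_le1 se ce) (ncomp_ge1 x se) //.
apply/(ncomp_gt1 (del_sym _)); exists x, y; apply/negP => cxy.
have cl : closed (del_edges e (delta (comp F x))) (comp F x).
  apply: intro_closed; first exact/sym_connect_sym/del_sym.
  move=> u v /andP[euv nd] uC; apply/negPn/negP => vC; move: nd.
  by rewrite mem_delta // uC vC.
move: (closed_connect cl cxy); rewrite (negbTE yC) inE.
by move/negbT/negP; apply.
Qed.

Lemma comp_sym F u v : connect (del_edges e F) u v -> connect (del_edges e F) v u.
Proof. by rewrite (sym_connect_sym (del_sym F)). Qed.

Lemma comp_out F x a : a \in comp F x -> forall z, z \in comp F a -> z \in comp F x.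
Proof. move=> ha z; rewrite !inE in ha *; move=> hz; exact: connect_trans ha hz. Qed.

Lemma bond_delta F : bond e F -> exists A, [/\ F = delta A, connected_on e A & connected_on e (~: A)].
Proof.
move=> bF; have := minsetp bF => /andP[_ hlt].
have [x0 _] : exists x0 : T, true.
  have : 0 < ncomp (del_edges e F) by apply: leq_ltn_trans hlt.
  by case/card_gt0P => z _; exists z.
have e1 : ncomp e = 1 by apply/eqP; rewrite eqn_leq (ncomp_le1 se ce) (ncomp_ge1 x0 se).
rewrite e1 in hlt; case/(ncomp_gt1 (del_sym F)): hlt => x [y nxy].
have yA : y \notin comp F x by rewrite inE.
have dA : delta (comp F x) = F := minsetinf bF (delta_comp_P yA) (delta_comp_sub F x).
exists (comp F x); split => //.
  move=> u v uA vA.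
  have cuv : connect (del_edges e F) u v.
    by move: uA vA; rewrite !inE => /comp_sym ha hb; apply: connect_trans ha hb.
  apply: (connect_restrict (S := comp F x) _ _ uA cuv).
    by move=> a b /andP[eab _] aA bA; rewrite /= eab aA bA.
  by move=> a b hab aA; rewrite -(@comp_closed F x a b hab).
have clA := @comp_closed F x.
have clC : forall a b, del_edges e F a b -> a \in ~: comp F x -> b \in ~: comp F x.
  by move=> a b hab; rewrite !in_setC (clA a b hab).
move=> u v uA vA.
case: (boolP (connect (del_edges e F) u v)) => cuv.
  apply: (connect_restrict (S := ~: comp F x) _ clC uA cuv).
  by move=> a b /andP[eab _] aA bA; rewrite /= eab aA bA.
exfalso.
have inD : forall w, w \in ~: comp F x -> x \notin comp F w.
  move=> w; rewrite !inE => wA; apply/negP => /comp_sym cw; by rewrite cw in wA.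
have dD : delta (comp F u) = F := minsetinf bF (delta_comp_P (inD u uA)) (delta_comp_sub F u).
have dD' : delta (comp F v) = F := minsetinf bF (delta_comp_P (inD v vA)) (delta_comp_sub F v).
have uD : u \in comp F u by rewrite inE connect0.
have [a [b [eab aD bD]]] := cut_edge se (ce u x) uD (inD u uA).
have hF : [set a; b] \in F by rewrite -dD mem_delta // aD bD.
have h1 : [set a; b] \in delta (comp F x) by rewrite dA.
have h2 : [set a; b] \in delta (comp F v) by rewrite dD'.
move: h1 h2; rewrite !mem_delta //.
have nA : forall w z, w \in ~: comp F x -> z \in comp F w -> z \notin comp F x.
  move=> w z; rewrite !inE => wA wz; apply/negP => xz.
  by move: wA; rewrite (connect_trans xz (comp_sym wz)).
have aA : a \notin comp F x := nA u a uA aD.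
have aD' : a \notin comp F v.
  apply/negP; rewrite !inE => va; move: cuv; rewrite inE in aD.
  by rewrite (connect_trans aD (comp_sym va)).
rewrite (negbTE aA) (negbTE aD') /= => hb1 hb2.
have hb : b \in comp F v by move: hb2; case: (b \in comp F v).
by move: hb1; rewrite (negbTE (nA v b vA hb)).
Qed.

End Bond.

Section G9.
Variable K : nat.
Notation T := ('I_(sz K)).
Notation ge := (@ge K).

Lemma nc x y (p q : T) : E K 0 x y -> ge p q -> x < p < y -> (q < x) || (y < q) -> False.
Proof.
move=> Exy Hpq h1 h2; have [s1 s2 s3] := E_range Exy.
case/orP: Hpq => H; have [r1 r2 r3] := E_range H.
  by apply: (E_noncross Exy H); lia.
by apply: (E_noncross H Exy); lia.
Qed.

Lemma jump (S : {set T}) (a c b : T) : connected_on ge S -> a \in S -> c \in S ->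
  b \notin S -> a < b < c -> exists p q : T, [/\ p \in S, q \in S, p < b < q & E K 0 p q].
Proof.
move=> cS aS cS' bS h.
have aL : a \in [set z : T | z < b] by rewrite inE; lia.
have cL : c \notin [set z : T | z < b] by rewrite inE; lia.
have [p [q [/and3P[epq pS qS] hp hq]]] := cut_edge (@rst_sym K S) (cS _ _ aS cS') aL cL.
move: hp hq; rewrite !inE => hp hq.
have qb : q != b by apply: contraNneq bS => <-.
have qb' : b < q by move: qb; rewrite -val_eqE /=; lia.
exists p, q; split => //; first lia.
by apply: ge_lt => //; lia.
Qed.

Lemma interval_closed (S' : {set T}) (x y : T) : E K 0 x y -> x \notin S' -> y \notin S' ->
  closed (rst S') [set z : T | x < z < y].
Proof.
move=> Exy xS yS; apply: intro_closed; first exact: rst_csym.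
move=> u v /and3P[euv uS vS]; rewrite !inE => hu.
have vx : v != x by apply: contraNneq xS => <-.
have vy : v != y by apply: contraNneq yS => <-.
move: vx vy; rewrite -!val_eqE /= => vx vy.
case: (boolP (x < v < y)) => // hv; exfalso.
by apply: (nc Exy euv hu); lia.
Qed.

Lemma alt (S S' : {set T}) (a b c d : T) : [disjoint S & S'] ->
  connected_on ge S -> connected_on ge S' ->
  a \in S -> c \in S -> b \in S' -> d \in S' -> a < b -> b < c -> c < d -> False.
Proof.
move=> dj cS cS' aS cS2 bS dS h1 h2 h3.
have bnS : b \notin S by rewrite (disjointFl dj bS).
have cnS' : c \notin S' by rewrite (disjointFr dj cS2).
have hac : a < b < c by lia.
have hbd : b < c < d by lia.
have [p [q [pS qS hpq Epq]]] := jump cS aS cS2 bnS hac.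
have [u [v [uS vS huv Euv]]] := jump cS' bS dS cnS' hbd.
have pnS' : p \notin S' by rewrite (disjointFr dj pS).
have qnS' : q \notin S' by rewrite (disjointFr dj qS).
have unS : u \notin S by rewrite (disjointFl dj uS).
have vnS : v \notin S by rewrite (disjointFl dj vS).
have := closed_connect (interval_closed Epq pnS' qnS') (cS' _ _ bS uS).
rewrite !inE hpq => /esym/andP[pu uq].
have := closed_connect (interval_closed Euv unS vnS) (cS _ _ cS2 pS).
rewrite !inE huv => /esym/andP[up _].
by move: pu up; clear; lia.
Qed.

End G9.

Lemma ivt (f : nat -> bool) u v : u <= v -> f u != f v -> exists c, u < c <= v /\ f c.-1 != f c.
Proof.
elim: v => [|v IH] h.
  move=> hf; have hu : u = 0 by lia.
  by move: hf; rewrite hu eqxx.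
case: (eqVneq u v.+1) => [->|huv]; first by rewrite eqxx.
have huv' : u <= v by lia.
case: (eqVneq (f u) (f v)) => [fe|fn] hf.
  by exists v.+1; split; [lia| rewrite /= -fe].
by have [c [hc hc']] := IH huv' fn; exists c; split => //; lia.
Qed.

Section G10.
Variable K : nat.
Hypothesis K1 : 1 <= K.
Notation T := ('I_(sz K)).
Notation ge := (@ge K).
Variable A : {set T}.
Hypothesis cA : connected_on ge A.
Hypothesis cB : connected_on ge (~: A).

Definition f (m : nat) := [exists z : T, (z \in A) && ((z : nat) == m)].

Lemma fE (z : T) : f z = (z \in A).
Proof.
apply/existsP/idP => [[w /andP[wA /eqP wz]]|zA]; last by exists z; rewrite zA eqxx.
by have -> : z = w by apply: val_inj.
Qed.

Definition sw c := (0 < c < sz K) && (f c.-1 != f c).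

Lemma alt4 a b c d : a < b -> b < c -> c < d -> d < sz K ->
  f a = f c -> f b = f d -> f a != f b -> False.
Proof.
move=> h1 h2 h3 h4.
have ha : a < sz K by lia.
have hb : b < sz K by lia.
have hc : c < sz K by lia.
pose oa := Ordinal ha; pose ob := Ordinal hb; pose oc := Ordinal hc; pose od := Ordinal h4.
have -> : a = oa by []. have -> : b = ob by []. have -> : c = oc by []. have -> : d = od by [].
rewrite !fE.
have dj : [disjoint A & ~: A] by rewrite disjoint_subset; apply/subsetP => z; rewrite !inE negbK.
have dj' : [disjoint ~: A & A] by rewrite disjoint_sym.
case: (boolP (oa \in A)) => ia.
  move=> ic id ib.
  have ib' : ob \in ~: A by rewrite inE; move: ib; case: (ob \in A).
  have id' : od \in ~: A by rewrite inE -id; move: ib; case: (ob \in A).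
  have ic' : oc \in A by rewrite -ic.
  exact: (alt dj cA cB ia ic' ib' id' h1 h2 h3).
move=> ic id ib.
have ib' : ob \in A by move: ib; case: (ob \in A).
have id' : od \in A by rewrite -id.
have ic' : oc \in ~: A by rewrite inE -ic.
have ia' : oa \in ~: A by rewrite inE.
exact: (alt dj' cB cA ia' ic' ib' id' h1 h2 h3).
Qed.

Lemma no3 x y z : sw x -> sw y -> sw z -> x < y -> y < z -> False.
Proof.
move=> /andP[hx fx] /andP[hy fy] /andP[hz fz] xy yz.
case e1 : (f y.-1 == f x.-1).
  move/eqP: e1 => e1.
  have hne : y.-1 != x.
    by apply/negP => /eqP hh; move: e1 fx; rewrite hh => ->; rewrite eqxx.
  by apply: (alt4 (a := x.-1) (b := x) (c := y.-1) (d := y)); lia.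
have fy1 : f y = f x.-1 by move: e1 fy; case: (f y.-1); case: (f x.-1); case: (f y).
have fxx : f x = f y.-1 by move: e1 fx; case: (f y.-1); case: (f x.-1); case: (f x).
case e2 : (f z == f x).
  move/eqP: e2 => e2.
  by apply: (alt4 (a := x.-1) (b := x) (c := y) (d := z)); lia.
have e3 : f z.-1 = f x by move: e2 fz; case: (f z); case: (f x); case: (f z.-1).
have hz1 : y < z.-1.
  case: (ltnP y z.-1) => // hh; have hh' : z.-1 = y by lia.
  by move: e3; rewrite hh' fy1 => e; move: fx; rewrite e eqxx.
by apply: (alt4 (a := x.-1) (b := x) (c := y) (d := z.-1)); lia.
Qed.

Lemma cover : exists c1 c2, [/\ c1 <= c2, (forall c, sw c -> c = c1 \/ c = c2) &
  (c1 < c2 -> sw c1 /\ sw c2)].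
Proof.
case: (boolP [exists c : T, sw c]) => [/existsP[c0 s0]|none].
  have exP : exists i, sw i by exists c0.
  have ubP : forall i, sw i -> i <= sz K by move=> i /andP[h _]; lia.
  case: (ex_minnP exP) => c1 s1 m1; case: (ex_maxnP exP ubP) => c2 s2 m2.
  exists c1, c2; split; first exact: m1.
    move=> c sc; have h1 := m1 c sc; have h2 := m2 c sc.
    case: (ltngtP c1 c) => [h3|h3|<-]; last by left.
      case: (ltngtP c c2) => [h4|h4|->]; last by right.
        by exfalso; apply: (no3 s1 sc s2).
      lia.
    lia.
  by [].
exists 0, 0; split => // c sc; exfalso.
have hc : c < sz K by case/andP: sc => /andP[].
by move/existsP: none; apply; exists (Ordinal hc).
Qed.

Lemma fconst u v : u <= v -> v < sz K -> (forall c, sw c -> (c <= u) || (v < c)) -> f u = f v.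
Proof.
move=> uv vn hc; case: (eqVneq (f u) (f v)) => // neq.
have [c [hc1 hc2]] := ivt uv neq.
have sc : sw c by rewrite /sw hc2 andbT; lia.
by have := hc c sc; lia.
Qed.

Lemma parity c1 c2 : c1 < c2 -> sw c1 -> sw c2 -> (forall c, sw c -> c = c1 \/ c = c2) ->
  f 0 = f (sz K).-1.
Proof.
move=> h12 s1 s2 cov.
have [h1 f1] := andP s1; have [h2 f2] := andP s2.
have e1 : f 0 = f c1.-1 by apply: fconst; try lia; move=> c /cov[]->; lia.
have e2 : f c1 = f c2.-1 by apply: fconst; try lia; move=> c /cov[]->; lia.
have e3 : f c2 = f (sz K).-1 by apply: fconst; try lia; move=> c /cov[]->; lia.
by move: f1 f2; rewrite e1 -e3 e2; case: (f c1.-1); case: (f c2.-1); case: (f c1); case: (f c2).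
Qed.

Definition g (pr : nat * nat) : {set T} := [set z : T | ((z : nat) == pr.1) || ((z : nat) == pr.2)].

Definition rest c := behead (crs K 0 c).

Lemma crs_head j o c : o < c < o + sz j -> crs j o c = (o, o + sz j - 1) :: behead (crs j o c).
Proof. by case: j => [|j] h /=; rewrite h. Qed.

Lemma in_rest c u v : 0 < c < sz K -> E K 0 u v -> u < c <= v -> (u, v) != (0, sz K - 1) ->
  (u, v) \in rest c.
Proof.
move=> hc Euv huv ne; have := crs_mem Euv huv.
rewrite (crs_head (j := K) (o := 0)) ?add0n // inE => /orP[] //.
by move=> /eqP e; move: ne; rewrite e eqxx.
Qed.

Definition img c := [set:: map g (rest c)].

Lemma card_img c : #|img c| <= K.
Proof.
rewrite /img cardsE; apply: leq_trans (card_size _) _.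
rewrite size_map /rest size_behead; have := crs_size K 0 c; lia.
Qed.

Lemma g_edge (a b : T) : [set a; b] = g (a : nat, b : nat).
Proof. by apply/setP => z; rewrite !inE /= !val_eqE. Qed.

Lemma key c1 c2 (a b : T) : (forall c, sw c -> c = c1 \/ c = c2) ->
  a < b -> ge a b -> f a != f b -> (a : nat, b : nat) != (0, sz K - 1) ->
  [set a; b] \in img c1 :|: img c2.
Proof.
move=> cov ab eab fab ne.
have Eab := ge_lt eab ab.
have [c [hc fc]] := ivt (ltnW ab) fab.
have sc : sw c by rewrite /sw fc andbT; have := ltn_ord b; lia.
have hin : (a : nat, b : nat) \in rest c.
  apply: in_rest => //; have := ltn_ord b; lia.
have : [set a; b] \in img c by rewrite g_edge /img inE; apply: map_f.
by case: (cov c sc) => <- h; rewrite inE h ?orbT.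
Qed.

Lemma delta_bound : #|delta ge A| <= K + K.
Proof.
have [c1 [c2 [le12 cov two]]] := cover.
have irr := @ge_irr K.
have gen : forall a b : T, ge a b -> f a != f b -> (a : nat, b : nat) != (0, sz K - 1) ->
    (b : nat, a : nat) != (0, sz K - 1) -> [set a; b] \in img c1 :|: img c2.
  move=> a b eab fab n1 n2; case: (ltngtP a b) => hab.
  - exact: key.
  - rewrite setUC; apply: key => //; first by rewrite ge_sym.
    by rewrite eq_sym.
  - have e : a = b by apply: val_inj.
    by move: eab; rewrite e irr.
have hn1 : 0 < sz K by have := sz_ge2 K; lia.
have hn2 : (sz K).-1 < sz K by lia.
case: (eqVneq (f 0) (f (sz K).-1)) => ef.
  have sub : delta ge A \subset img c1 :|: img c2.
    apply/subsetP => z /imset2P[a b aA hb ->]; rewrite inE in hb; case/andP: hb => bA eab.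
  rewrite inE in bA.
    have fab : f a != f b by rewrite !fE aA (negbTE bA).
    apply: gen => //; apply/negP => /eqP[e1 e2]; move: fab ef.
    - by rewrite e1 e2 subn1 => h1 h2; move: h1; rewrite h2 eqxx.
    - by rewrite e1 e2 subn1 => h1 h2; move: h1; rewrite h2 eqxx.
  apply: leq_trans (subset_leq_card sub) _.
  rewrite cardsU; apply: leq_trans (leq_subr _ _) _; apply: leq_add; apply: card_img.
have e12 : c1 = c2.
  case: (ltngtP c1 c2) => // h; last lia.
  by have [s1 s2] := two h; move: ef; rewrite (parity h s1 s2 cov) eqxx.
subst c2; rewrite setUid in gen.
have sub : delta ge A \subset g (0, sz K - 1) |: img c1.
  apply/subsetP => z /imset2P[a b aA hb ->]; rewrite inE in hb; case/andP: hb => bA eab.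
  rewrite inE in bA.
  have fab : f a != f b by rewrite !fE aA (negbTE bA).
  case: (eqVneq (a : nat, b : nat) (0, sz K - 1)) => [[e1 e2]|n1].
    by rewrite g_edge e1 e2 setU11.
  case: (eqVneq (b : nat, a : nat) (0, sz K - 1)) => [[e1 e2]|n2].
    by rewrite setUC g_edge e1 e2 setU11.
  by apply/setU1P; right; exact: (gen a b eab fab n1 n2).
apply: leq_trans (subset_leq_card sub) _.
rewrite cardsU1; apply: leq_trans (leq_add (leq_b1 _) (card_img c1)) _; lia.
Qed.

End G10.


Theorem theorem1p5 :
  forall k : nat, 1 <= k ->
  exists (n : nat) (e : rel 'I_n),
    [/\ simple_graph e, two_connected e, pathwidth_at_least e k &
        cocircumference e <= 2 * k].
Proof.
move=> k k1; exists (sz k), (@ge k); split.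
- exact: ge_simple.
- exact: ge_2conn.
- move=> s pd; have := pw_ge pd; lia.
- apply/bigmax_leqP => F bF.
  have [_ [cT _]] := ge_2conn k1.
  have ce : forall x y, connect (@ge k) x y.
    move=> x y; apply: connect_sub (cT x y (in_setT x) (in_setT y)) => u v /and3P[h _ _].
    exact: connect1.
  have [A [-> cA cB]] := bond_delta (@ge_sym k) ce bF.
  have := delta_bound k1 cA cB; lia.
Qed.
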